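(* The image of the cone $C$ under the linear map $\psi^*\otimes\mathbb{R}:\mathbb{Z}(Q)^\vee\otimes\mathbb{R}\to N\otimes\mathbb{R}$ is the cone $\sigma$.
   Context: Let $\mathbb{k}$ be an algebraically closed field and $X=\operatorname{Spec}R$ a normal affine toric variety of dimension $n$ with a torus-fixed point, $R=\mathbb{k}[\sigma^\vee\cap M]$, $\sigma\subset N\otimes\mathbb{R}$ strongly convex rational polyhedral, $N=M^\vee$. Let $\sigma(1)$ be the rays, $d=|\sigma(1)|$, $v_\rho$ primitive generators, $D_\rho$ toric prime divisors, torus-invariant divisors identified with $\mathbb{Z}^d$; exact sequence $0\to M\to\mathbb{Z}^d\xrightarrow{\deg}\operatorname{Cl}(X)\to0$, $u\mapsto\sum_\rho\langle u,v_\rho\rangle D_\rho$. Let $\mathscr{E}=(E_0=\mathcal{O}_X,E_1,\dots,E_r)$ be pairwise distinct rank one reflexive sheaves, $E_i=\mathcal{O}_X(D_i')$, and $Q$ its quiver of sections: vertices $0,\dots,r$; an arrow $a:i\to j$ with label $\operatorname{div}(a)\in\mathbb{N}^d$ for each irreducible $T_M$-invariant section $x^{\operatorname{div}(a)}$ of $\operatorname{Hom}(E_i,E_j)\cong H^0(\mathcal{O}_X(D_j'-D_i'))$ (irreducible: not in the image of multiplication through any $E_k$, $k\neq i,j$). $\operatorname{Wt}(Q)=\{\theta\in\mathbb{Z}^{Q_0}:\sum\theta_i=0\}$; $\pi:\mathbb{Z}^{Q_1}\to\operatorname{Wt}(Q)\oplus\mathbb{Z}^d$, $\chi_a\mapsto(\chi_{\mathsf{h}(a)}-\chi_{\mathsf{t}(a)},\operatorname{div}(a))$;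 $\mathbb{Z}(Q)=\pi(\mathbb{Z}^{Q_1})$, $\mathbb{N}(Q)=\pi(\mathbb{N}^{Q_1})$; $\pi_1,\pi_2$ the projections to $\operatorname{Wt}(Q)$ and $\mathbb{Z}^d$. The restriction of $\pi_2$ to $\ker\pi_1$ is an isomorphism onto the image of $M$ in $\mathbb{Z}^d$; let $\psi:M\to\mathbb{Z}(Q)$ be the resulting injection (so $\pi_2\circ\psi$ is the inclusion $M\hookrightarrow\mathbb{Z}^d$), with dual $\psi^*:\mathbb{Z}(Q)^\vee\to N$. Let $C=\{v\in\mathbb{Z}(Q)^\vee\otimes\mathbb{R}:\langle v,u\rangle\ge0\ \forall u\in\mathbb{N}(Q)\}$. *)

(* Defs.v *)
From HB Require Import structures.
From mathcomp Require Import all_boot all_order all_algebra.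
From mathcomp Require Import reals.
Set Implicit Arguments. Unset Strict Implicit. Unset Printing Implicit Defensive.
Import Order.TTheory GRing.Theory Num.Theory.
Local Open Scope ring_scope.

(* M = N = Z^n (row vectors), with the standard pairing.
   Rays: v : 'I_d -> 'rV[int]_n (the primitive generators v_rho in N).
   Torus-invariant divisors: 'rV[int]_d = Z^d. *)

(* the map M -> Z^d, u |-> sum_rho <u, v_rho> D_rho *)
Definition divmap (n d : nat) (v : 'I_d -> 'rV[int]_n) (u : 'rV[int]_n)
  : 'rV[int]_d := \row_rho (\sum_i u 0 i * v rho 0 i).

(* e is the label (divisor of zeros) of a T_M-invariant section of O_X(D):
   e is effective and linearly equivalent to D *)
Definition inv_section (n d : nat) (v : 'I_d -> 'rV[int]_n)
  (D e : 'rV[int]_d) : Prop :=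
  (forall rho, 0 <= e 0 rho) /\ exists u, e = D + divmap v u.

(* irreducible T_M-invariant section of Hom(E_i,E_j) = H^0(O(D_j' - D_i'))
   with label e: not in the image of multiplication through E_k, k <> i,j *)
Definition irr_arrow (n d r : nat) (v : 'I_d -> 'rV[int]_n)
  (D' : 'I_r.+1 -> 'rV[int]_d) (i j : 'I_r.+1) (e : 'rV[int]_d) : Prop :=
  inv_section v (D' j - D' i) e /\
  ~ (exists k : 'I_r.+1, k != i /\ k != j /\
       exists e1 e2, inv_section v (D' k - D' i) e1 /\
                     inv_section v (D' j - D' k) e2 /\ e = e1 + e2).

Definition chi (r : nat) (i : 'I_r.+1) : 'rV[int]_r.+1 :=
  \row_k (k == i)%:R.

(* pi(chi_a) = (chi_{h(a)} - chi_{t(a)}, div(a)) in Wt(Q) (+) Z^d *)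
Definition piQ (d r : nat) (i j : 'I_r.+1) (e : 'rV[int]_d)
  : 'rV[int]_r.+1 * 'rV[int]_d := (chi j - chi i, e).

(* N(Q) = pi(N^{Q_1}) : the monoid generated by the pi(chi_a) *)
Inductive NQ (n d r : nat) (v : 'I_d -> 'rV[int]_n)
  (D' : 'I_r.+1 -> 'rV[int]_d) : 'rV[int]_r.+1 * 'rV[int]_d -> Prop :=
| NQ0 : NQ v D' 0
| NQadd : forall x i j e, NQ v D' x -> irr_arrow v D' i j e ->
    NQ v D' (x + piQ i j e).

(* Z(Q) = pi(Z^{Q_1}) = N(Q) - N(Q) *)
Definition ZQ (n d r : nat) (v : 'I_d -> 'rV[int]_n)
  (D' : 'I_r.+1 -> 'rV[int]_d) (x : 'rV[int]_r.+1 * 'rV[int]_d) : Prop :=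
  exists y z, NQ v D' y /\ NQ v D' z /\ x = y - z.

(* psi : M -> Z(Q): the unique element of ker pi_1 with pi_2 = u |-> div *)
Definition psiQ (n d r : nat) (v : 'I_d -> 'rV[int]_n) (m : 'rV[int]_n)
  : 'rV[int]_r.+1 * 'rV[int]_d := (0, divmap v m).

Definition in_cone (R : realType) (n d : nat) (v : 'I_d -> 'rV[int]_n)
  (P : pred 'I_d) (x : 'rV[R]_n) : Prop :=
  exists lam : 'I_d -> R, (forall rho, 0 <= lam rho) /\
    x = \sum_(rho | P rho) lam rho *: map_mx (fun z : int => z%:~R) (v rho).

Definition pairMN (R : realType) (n : nat) (m : 'rV[int]_n) (x : 'rV[R]_n) : R :=
  \sum_i (m 0 i)%:~R * x 0 i.

(* Main.v *)
Require Import Defs.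
From HB Require Import structures.
From mathcomp Require Import all_boot all_order all_algebra.
From mathcomp Require Import reals.
From Stdlib Require Import Classical.
From mathcomp Require Import ring lra zify.
Import Order.TTheory GRing.Theory Num.Theory.
Local Open Scope ring_scope.
Set Implicit Arguments. Unset Strict Implicit. Unset Printing Implicit Defensive.

Section FM.
Variable R : realFieldType.
Variable d : nat.
Definition cstr := ('rV[int]_d * R)%type.
Definition dot (c : 'rV[int]_d) (l : 'I_d -> R) := \sum_k (c 0 k)%:~R * l k.
Definition sat (l : 'I_d -> R) (p : cstr) := dot p.1 l <= p.2.

Inductive der (S : seq cstr) : cstr -> Prop :=
| der0 : der S 0
| derS : forall p q, der S p -> q \in S -> der S (p + q).

Lemma der_add S p q : der S p -> der S q -> der S (p + q).
Proof.
move=> hp; elim=> [|q1 q2 _ IH hq2]; first by rewrite addr0.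
by rewrite addrA; apply: derS.
Qed.

Lemma der_mem S q : q \in S -> der S q.
Proof. by move=> h; rewrite -(add0r q); apply: derS => //; apply: der0. Qed.

Lemma der_muln S p k : der S p -> der S (p *+ k).
Proof.
move=> hp; elim: k => [|k IH]; first by rewrite mulr0n; apply: der0.
by rewrite mulrS; apply: der_add.
Qed.

Lemma der_sub S S' p : (forall q, q \in S' -> der S q) -> der S' p -> der S p.
Proof.
move=> hS; elim=> [|p1 q _ IH hq]; first exact: der0.
by apply: der_add => //; apply: hS.
Qed.

Lemma dotD c1 c2 l : dot (c1 + c2) l = dot c1 l + dot c2 l.
Proof.
by rewrite /dot -big_split; apply: eq_bigr => k _; rewrite mxE intrD mulrDl.
Qed.

Lemma pair1_muln (p : cstr) k : (p *+ k).1 = p.1 *+ k.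
Proof. by elim: k => [|k IH] //; rewrite !mulrS /= IH. Qed.
Lemma pair2_muln (p : cstr) k : (p *+ k).2 = p.2 *+ k.
Proof. by elim: k => [|k IH] //; rewrite !mulrS /= IH. Qed.
Lemma entry_muln (c : 'rV[int]_d) k j : (c *+ k) 0 j = c 0 j *+ k.
Proof. by elim: k => [|k IH]; rewrite ?mulr0n ?mxE // !mulrS mxE IH. Qed.

Lemma dot_muln c k l : dot (c *+ k) l = dot c l *+ k.
Proof.
by elim: k => [|k IH]; rewrite ?mulr0n ?mulrS ?dotD ?IH //
  /dot big1 // => i _; rewrite mxE mul0r.
Qed.

Definition upd (l : 'I_d -> R) j t := fun k => if k == j then t else l k.

Lemma dot_upd c l j t :
  dot c (upd l j t) = dot c l - (c 0 j)%:~R * l j + (c 0 j)%:~R * t.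
Proof.
rewrite /dot (bigD1 j) //= [in RHS](bigD1 j) //= /upd eqxx.
have -> : \sum_(i < d | i != j) (c 0 i)%:~R * (if i == j then t else l i) =
  \sum_(i < d | i != j) (c 0 i)%:~R * l i by apply: eq_bigr => k /negbTE ->.
lra.
Qed.

Lemma between (L U : seq R) : (forall a b, a \in L -> b \in U -> a <= b) ->
  exists t, (forall a, a \in L -> a <= t) /\ (forall b, b \in U -> t <= b).
Proof.
elim: L => [|a L IH] h.
  elim: U {h} => [|u U [t [_ ht]]]; first by exists 0.
  exists (Order.min t u); split => // b; rewrite inE => /orP [/eqP ->|hb].
    by rewrite ge_min lexx orbT.
  by rewrite ge_min ht.
have [t [h1 h2]] : exists t, (forall a, a \in L -> a <= t) /\ (forall b, b \in U -> t <= b).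
  by apply: IH => a' b ha hb; apply: h => //; rewrite inE ha orbT.
exists (Order.max t a); split.
  move=> a'; rewrite inE => /orP [/eqP ->|ha]; first by rewrite le_max lexx orbT.
  by rewrite le_max h1.
by move=> b hb; rewrite ge_max h2 // h // inE eqxx.
Qed.

Section Elim.
Variable j : 'I_d.
Variable S : seq cstr.
Definition Pp := [seq p : cstr <- S | 0 < p.1 0 j].
Definition Nn := [seq p : cstr <- S | p.1 0 j < 0].
Definition Zz := [seq p : cstr <- S | p.1 0 j == 0].
Definition comb (p q : cstr) : cstr := p *+ absz (q.1 0 j) + q *+ absz (p.1 0 j).
Definition S' := Zz ++ [seq comb p q | p <- Pp, q <- Nn].

Lemma comb1 p q k : (comb p q).1 0 k = p.1 0 k *+ absz (q.1 0 j) + q.1 0 k *+ absz (p.1 0 j).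
Proof. by rewrite /comb /= mxE !pair1_muln !entry_muln. Qed.

Lemma S'_mem q : q \in S' ->
  q.1 0 j = 0 /\ (forall k, (forall p, p \in S -> p.1 0 k = 0) -> q.1 0 k = 0) /\ der S q.
Proof.
rewrite mem_cat => /orP [].
  rewrite mem_filter => /andP [/eqP h hq]; split => //; split; last exact: der_mem.
  by move=> k hk; apply: hk.
move=> /allpairsP [[p q'] [/=]]; rewrite !mem_filter => /andP [hp pS] /andP [hq qS] ->.
split; [|split].
- rewrite comb1 !mulr_absz !mulrzz (ger0_norm (ltW hp)) (ltr0_norm hq).
  by rewrite mulrN mulrC addNr.
- by move=> k hk; rewrite comb1 !hk // !mul0rn addr0.
- by apply: der_add; apply: der_muln; apply: der_mem.
Qed.

Definition rest (l : 'I_d -> R) (p : cstr) :=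
  p.2 - dot p.1 l + (p.1 0 j)%:~R * l j.

Lemma sat_upd l t p : sat (upd l j t) p = ((p.1 0 j)%:~R * t <= rest l p).
Proof.
rewrite /sat /rest dot_upd.
by apply/idP/idP => h; lra.
Qed.

Lemma elim_feas l : (forall q, q \in S' -> sat l q) ->
  exists l', forall p, p \in S -> sat l' p.
Proof.
move=> hl.
pose L := [seq rest l q / (q.1 0 j)%:~R | q <- Nn].
pose U := [seq rest l p / (p.1 0 j)%:~R | p <- Pp].
have [t [hL hU]] : exists t, (forall a, a \in L -> a <= t) /\ (forall b, b \in U -> t <= b).
  apply: between => a b /mapP [q hq ->] /mapP [p hp ->].
  have hc : sat l (comb p q).
    by apply: hl; rewrite mem_cat; apply/orP; right; apply/allpairsP; exists (p, q).
  move: hp hq; rewrite !mem_filter => /andP [hp _] /andP [hq _].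
  move: hc; rewrite /sat /comb /= dotD !pair1_muln !dot_muln !pair2_muln.
  rewrite !mulr_absz (ger0_norm (ltW hp)) (ltr0_norm hq).
  rewrite -(mulrzr (dot p.1 l)) -(mulrzr (dot q.1 l)) -(mulrzr p.2) -(mulrzr q.2) => hc.
  have hp' : 0 < (p.1 0 j)%:~R :> R by rewrite ltr0z.
  have hq' : (q.1 0 j)%:~R < 0 :> R by rewrite ltrz0.
  rewrite ler_ndivrMr // mulrAC ler_pdivrMr //.
  move: hc; rewrite /rest rmorphN /=.
  set cp := (p.1 0 j)%:~R; set cq := (q.1 0 j)%:~R.
  set dp := dot p.1 l; set dq := dot q.1 l => hc.
  have e : (q.2 - dq + cq * l j) * cp - (p.2 - dp + cp * l j) * cq =
    (p.2 * - cq + q.2 * cp) - (dp * - cq + dq * cp) by ring.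
  by rewrite -subr_ge0 e subr_ge0.
exists (upd l j t) => p pS; rewrite sat_upd.
have [hpos|hneg|hz] := ltrgtP 0 (p.1 0 j).
- have hp' : 0 < (p.1 0 j)%:~R :> R by rewrite ltr0z.
  rewrite mulrC -ler_pdivlMr //; apply: hU; apply/mapP; exists p => //.
  by rewrite mem_filter hpos.
- have hq' : (p.1 0 j)%:~R < 0 :> R by rewrite ltrz0.
  rewrite mulrC -ler_ndivrMr //; apply: hL; apply/mapP; exists p => //.
  by rewrite mem_filter hneg.
- have : sat l p by apply: hl; rewrite mem_cat mem_filter -hz eqxx pS.
  by rewrite -hz mul0r /sat /rest -hz mul0r addr0 subr_ge0.
Qed.
End Elim.

Lemma FM (J : seq 'I_d) (S : seq cstr) :
  (forall p k, p \in S -> k \notin J -> p.1 0 k = 0) ->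
  (exists l, forall p, p \in S -> sat l p) \/ (exists b, b < 0 /\ der S (0, b)).
Proof.
elim: J S => [|j J IH] S hS.
  have hz p : p \in S -> p.1 = 0.
    by move=> pS; apply/matrixP => i k; rewrite [i]ord1 mxE hS.
  case: (boolP (all (fun p : cstr => 0 <= p.2) S)) => [/allP ha|].
    left; exists (fun _ => 0) => p pS; rewrite /sat hz // /dot big1 ?ha //.
    by move=> k _; rewrite mxE mul0r.
  rewrite -has_predC => /hasP [p pS /= hp]; right; exists p.2; split.
    by rewrite ltNge.
  have e : p = (0, p.2) by move: (hz p pS); case: p {pS hp} => a b /= ->.
  by rewrite -e; apply: der_mem.
have := IH (S' j S); case.
- move=> q k /S'_mem [h1 [h2 _]]; move=> hkJ.
  have [/eqP -> //|hk] := boolP (k == j).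
  by apply: h2 => p pS; apply: hS => //; rewrite inE negb_or hk.
- by move=> [l hl]; left; exact: (@elim_feas j S l hl).
- move=> [b [hb hder]]; right; exists b; split => //.
  by apply: der_sub hder => q /S'_mem [_ [_]].
Qed.
End FM.

Section Toric.
Variables (n d : nat) (v : 'I_d -> 'rV[int]_n).

Lemma divmapE u rho : divmap v u 0 rho = \sum_i u 0 i * v rho 0 i.
Proof. by rewrite mxE. Qed.

Lemma divmapD u w : divmap v (u + w) = divmap v u + divmap v w.
Proof.
apply/matrixP => a rho; rewrite [a]ord1 !mxE -big_split.
by apply: eq_bigr => i _; rewrite mxE mulrDl.
Qed.

Lemma divmapN u : divmap v (- u) = - divmap v u.
Proof.
apply/matrixP => a rho; rewrite [a]ord1 !mxE -sumrN.
by apply: eq_bigr => i _; rewrite mxE mulNr.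
Qed.

Lemma divmap_delta i0 rho : divmap v (delta_mx 0 i0) 0 rho = v rho 0 i0.
Proof.
rewrite mxE (bigD1 i0) //= big1 ?addr0; first by rewrite mxE !eqxx mul1r.
by move=> i /negbTE hi; rewrite mxE hi andbF mul0r.
Qed.

Lemma divmap0 rho : divmap v 0 0 rho = 0.
Proof. by rewrite mxE big1 // => i _; rewrite mxE mul0r. Qed.

Variable R : realType.

Lemma pairMND (u w : 'rV[int]_n) (x : 'rV[R]_n) :
  pairMN (u + w) x = pairMN u x + pairMN w x.
Proof. by rewrite /pairMN -big_split; apply: eq_bigr => i _; rewrite mxE intrD mulrDl. Qed.

Lemma pairMNN (u : 'rV[int]_n) (x : 'rV[R]_n) : pairMN (- u) x = - pairMN u x.
Proof. by rewrite /pairMN -sumrN; apply: eq_bigr => i _; rewrite mxE intrN mulNr. Qed.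

Lemma pairMN_delta i0 (x : 'rV[R]_n) : pairMN (delta_mx 0 i0) x = x 0 i0.
Proof.
rewrite /pairMN (bigD1 i0) //= big1 ?addr0; first by rewrite mxE !eqxx mul1r.
by move=> i /negbTE hi; rewrite mxE hi andbF mul0r.
Qed.

Lemma pairMN0 (x : 'rV[R]_n) : pairMN 0 x = 0.
Proof. by rewrite /pairMN big1 // => i _; rewrite mxE mul0r. Qed.

Definition Arow (i : 'I_n) : 'rV[int]_d := \row_rho v rho 0 i.

Definition Sys (x : 'rV[R]_n) : seq (cstr R d) :=
  [seq (- delta_mx 0 rho, 0) | rho <- enum 'I_d] ++
  ([seq (Arow i, x 0 i) | i <- enum 'I_n] ++
   [seq (- Arow i, - x 0 i) | i <- enum 'I_n]).

Lemma der_Sys x p0 : der (Sys x) p0 ->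
  exists y : 'rV[int]_n, exists nu : 'I_d -> int,
    (forall rho, 0 <= nu rho) /\
    (forall rho, p0.1 0 rho = divmap v y 0 rho - nu rho) /\ p0.2 = pairMN y x.
Proof.
elim=> [|p q _ [y [nu [hnu [h1 h2]]]] hq].
  exists 0, (fun _ => 0); split => //; split; last by rewrite pairMN0.
  by move=> rho; rewrite divmap0 mxE subrr.
have eD (a b : 'rV[int]_d) (k : 'I_d) : (a + b) 0 k = a 0 k + b 0 k by rewrite mxE.
have eN (a : 'rV[int]_d) (k : 'I_d) : (- a) 0 k = - a 0 k by rewrite mxE.
have eA (k : 'I_n) (rho : 'I_d) : Arow k 0 rho = v rho 0 k by rewrite mxE.
have eE (k rho : 'I_d) : (delta_mx 0 k : 'rV[int]_d) 0 rho = (rho == k)%:R by rewrite mxE eqxx.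
have dD (a b : 'rV[int]_n) (k : 'I_d) : divmap v (a + b) 0 k = divmap v a 0 k + divmap v b 0 k.
  by rewrite divmapD mxE.
have dN (a : 'rV[int]_n) (k : 'I_d) : divmap v (- a) 0 k = - divmap v a 0 k.
  by rewrite divmapN mxE.
move: hq; rewrite !mem_cat => /or3P [] /mapP [k _ ->].
- exists y, (fun rho => nu rho + (rho == k)%:R); split.
    by move=> rho; rewrite addr_ge0.
  split => [rho|]; last by rewrite /= h2 addr0.
  by rewrite /= eD eN eE h1; lia.
- exists (y + delta_mx 0 k), nu; split => //; split => [rho|].
    by rewrite /= eD h1 eA dD divmap_delta; lia.
  by rewrite /= h2 pairMND pairMN_delta.
- exists (y - delta_mx 0 k), nu; split => //; split => [rho|].
    by rewrite /= eD h1 eN eA dD dN divmap_delta; lia.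
  by rewrite /= h2 pairMND pairMNN pairMN_delta.
Qed.

Lemma dotN (c : 'rV[int]_d) (l : 'I_d -> R) : dot (- c) l = - dot c l.
Proof. by rewrite /dot -sumrN; apply: eq_bigr => k _; rewrite mxE intrN mulNr. Qed.

Lemma dot_delta rho (l : 'I_d -> R) : dot (delta_mx 0 rho) l = l rho.
Proof.
rewrite /dot (bigD1 rho) //= big1 ?addr0; first by rewrite mxE !eqxx mul1r.
by move=> k /negbTE hk; rewrite mxE hk andbF mul0r.
Qed.

Lemma farkas (x : 'rV[R]_n) :
  (forall m : 'rV[int]_n, (forall rho, 0 <= divmap v m 0 rho) -> 0 <= pairMN m x) ->
  exists lam : 'I_d -> R, (forall rho, 0 <= lam rho) /\
    x = \sum_(rho | predT rho) lam rho *: map_mx (fun z : int => z%:~R) (v rho).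
Proof.
move=> hm.
have := @FM R d (enum 'I_d) (Sys x).
case.
- by move=> p k _; rewrite mem_enum.
- move=> [l hl]; exists l; split.
    move=> rho; have := hl (- delta_mx 0 rho, 0).
    rewrite /sat /= dotN dot_delta oppr_le0; apply.
    by rewrite mem_cat; apply/orP; left; apply/mapP; exists rho; rewrite ?mem_enum.
  apply/matrixP => a i; rewrite [a]ord1 summxE.
  have h1 := hl (Arow i, x 0 i); have h2 := hl (- Arow i, - x 0 i).
  rewrite /sat /= dotN lerN2 in h2.
  have e : dot (Arow i) l = x 0 i.
    apply/eqP; rewrite eq_le; apply/andP; split; [apply: h1|apply: h2].
    + by rewrite !mem_cat; apply/or3P; apply: Or32; apply/mapP; exists i; rewrite ?mem_enum.
    + by rewrite !mem_cat; apply/or3P; apply: Or33; apply/mapP; exists i; rewrite ?mem_enum.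
  rewrite -e /dot; apply: eq_bigr => rho _; rewrite !mxE mulrC.
  by [].
- move=> [b [hb hder]].
  have [y [nu [hnu [h1 h2]]]] := der_Sys hder.
  have : 0 <= pairMN y x.
    by apply: hm => rho; move: (h1 rho) (hnu rho); rewrite mxE /=; lia.
  by rewrite -h2 /= leNgt hb.
Qed.
End Toric.

Section Quiver.
Variables (n d r : nat) (v : 'I_d -> 'rV[int]_n) (D' : 'I_r.+1 -> 'rV[int]_d).
Hypothesis hdist : forall i j : 'I_r.+1, i != j -> ~ exists u, D' i - D' j = divmap v u.

Lemma NQ_add y z : NQ v D' y -> NQ v D' z -> NQ v D' (y + z).
Proof.
move=> hy; elim=> [|x i j e _ IH hirr]; first by rewrite addr0.
by rewrite addrA; apply: NQadd.
Qed.

Definition msr (e : 'rV[int]_d) : int := \sum_rho e 0 rho.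

Lemma msrD e1 e2 : msr (e1 + e2) = msr e1 + msr e2.
Proof. by rewrite /msr -big_split; apply: eq_bigr => rho _; rewrite mxE. Qed.

Lemma msr_ge0 (e : 'rV[int]_d) : (forall rho, 0 <= e 0 rho) -> 0 <= msr e.
Proof. by move=> h; apply: sumr_ge0. Qed.

Lemma msr_gt0 (e : 'rV[int]_d) : (forall rho, 0 <= e 0 rho) -> e != 0 -> 0 < msr e.
Proof.
move=> h hne; case: (boolP [forall rho, e 0 rho == 0]) => [/forallP ha|].
  have e0 : e = 0 by apply/matrixP => a rho; rewrite [a]ord1 mxE; apply/eqP; apply: ha.
  by rewrite e0 eqxx in hne.
rewrite negb_forall => /existsP [rho hr].
rewrite /msr (bigD1 rho) //=; apply: ltr_wpDr; first by apply: sumr_ge0.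
by rewrite lt_def hr h.
Qed.

Lemma nz_sec i k e : k != i -> inv_section v (D' k - D' i) e -> e != 0.
Proof.
move=> hki [_ [u hu]]; apply/eqP => he; apply: (hdist hki); exists (- u).
rewrite divmapN; apply/eqP; rewrite -subr_eq0 opprK -hu he eqxx //.
Qed.

Lemma path_NQ N : forall i j e, msr e < N%:Z ->
  inv_section v (D' j - D' i) e -> NQ v D' (chi j - chi i, e).
Proof.
elim: N => [|N IH] i j e hN hs.
  by have := msr_ge0 (proj1 hs); lia.
case: (classic (exists k : 'I_r.+1, k != i /\ k != j /\
       exists e1 e2, inv_section v (D' k - D' i) e1 /\
                     inv_section v (D' j - D' k) e2 /\ e = e1 + e2)).
- move=> [k [hki [hkj [e1 [e2 [h1 [h2 he]]]]]]].
  have g1 := msr_gt0 (proj1 h1) (nz_sec hki h1).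
  have hjk : j != k by rewrite eq_sym.
  have g2 := msr_gt0 (proj1 h2) (nz_sec hjk h2).
  have hm := msrD e1 e2; rewrite -he in hm.
  have n1 := IH i k e1 ltac:(lia) h1.
  have n2 := IH k j e2 ltac:(lia) h2.
  have := NQ_add n1 n2.
  have -> // : (chi k - chi i, e1) + (chi j - chi k, e2) = (chi j - chi i, e).
  by rewrite he /=; congr (_, _); rewrite addrC addrA subrK.
- move=> hn.
  have -> : (chi j - chi i, e) = 0 + piQ i j e by rewrite add0r.
  by apply: NQadd; first exact: NQ0.
Qed.
End Quiver.

Theorem lemma2p10 (R : realType) (n d r : nat)
  (v : 'I_d -> 'rV[int]_n) (D' : 'I_r.+1 -> 'rV[int]_d)
  (* each v_rho is a primitive lattice vector *)
  (hprim : forall rho (k : nat), (forall i, (k%:Z %| v rho ord0 i)%Z) -> k = 1%N)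
  (* the v_rho are pairwise distinct *)
  (hinj : injective v)
  (* each v_rho spans an extremal ray: it is not in the cone of the others *)
  (hray : forall rho, ~ in_cone (R := R) v (fun rho' => rho' != rho)
                          (map_mx (fun z : int => z%:~R) (v rho)))
  (* sigma is strongly convex *)
  (hstrong : forall x : 'rV[R]_n, in_cone v predT x -> in_cone v predT (- x) -> x = 0)
  (* X has a torus-fixed point: sigma is full-dimensional *)
  (hfull : forall x : 'rV[R]_n, exists c : 'I_d -> R,
             x = \sum_rho c rho *: map_mx (fun z : int => z%:~R) (v rho))
  (* E_0 = O_X *)
  (hE0 : exists u, D' ord0 = divmap v u)
  (* the E_i are pairwise non-isomorphic *)
  (hdist : forall i j : 'I_r.+1, i != j -> ~ exists u, D' i - D' j = divmap v u) :
  forall x : 'rV[R]_n,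
    in_cone v predT x <->
    exists phi : 'rV[int]_r.+1 * 'rV[int]_d -> R,
      (* phi is an element of Z(Q)^vee (x) R = Hom(Z(Q), R) *)
      (forall y z, ZQ v D' y -> ZQ v D' z -> phi (y + z) = phi y + phi z) /\
      (* phi lies in C *)
      (forall y, NQ v D' y -> 0 <= phi y) /\
      (* (psi^* (x) R)(phi) = x *)
      (forall m : 'rV[int]_n, phi (psiQ r v m) = pairMN m x).
Proof.
move=> x; split.
- move=> [lam [hlam hx]].
  exists (fun y : 'rV[int]_r.+1 * 'rV[int]_d => \sum_rho lam rho * (y.2 0 rho)%:~R); split; last split.
  + move=> y z _ _; rewrite -big_split; apply: eq_bigr => rho _.
    by rewrite /= mxE intrD mulrDr.
  + move=> y; elim=> [|y' i j e _ IH [[he _] _]].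
      by rewrite big1 // => rho _; rewrite mxE mulr0.
    rewrite /= (eq_bigr (fun rho => lam rho * (y'.2 0 rho)%:~R + lam rho * (e 0 rho)%:~R)).
      rewrite big_split /=; apply: addr_ge0 => //.
      by apply: sumr_ge0 => rho _; apply: mulr_ge0 => //; rewrite ler0z.
    by move=> rho _; rewrite mxE intrD mulrDr.
  + move=> m; rewrite /pairMN hx /=.
    under [in RHS]eq_bigr => i _ do rewrite summxE mulr_sumr.
    rewrite exchange_big /=; apply: eq_bigr => rho _.
    rewrite mxE rmorph_sum mulr_sumr; apply: eq_bigr => i _.
    by rewrite !mxE rmorphM /=; ring.
- move=> [phi [_ [hpos hpsi]]].
  have := farkas (x := x) _.
  apply => m hm; rewrite -hpsi; apply: hpos.
  rewrite /psiQ -(subrr (chi (ord0 : 'I_r.+1))).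
  apply: (@path_NQ _ _ _ v D' hdist (absz (msr (divmap v m))).+1).
    by have := msr_ge0 (e := divmap v m) hm; lia.
  split => //; exists m; by rewrite subrr add0r.
Qed.
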